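(* Consider an instance with $n$ agents, $m$ indivisible items and binary additive valuations, and fix a stable allocation $\chi$ with profile $(h_1,\dots,h_n)$ (notation as in the context). For integers $d\ge 0$ define $p_d=\{i: h_i=d \text{ and } \chi \text{ admits a transfer } i\to j \text{ for some } j \text{ with } h_j=d-1\}$, $q_d=\{i: h_i=d \text{ and } \chi \text{ admits a transfer } k\to i \text{ for some } k \text{ with } h_k=d+1\}$, $r_d=\{i: h_i=d,\ i\notin p_d,\ i\notin q_d\}$, $s_d=p_d\cup q_{d-1}$ (with $q_{-1}=\emptyset$), and let $R_d=\bigcup_{i\in r_d}\chi_i$ and $S_d=\bigcup_{i\in s_d}\chi_i$. Then for every stable allocation $\chi'$ and every $d$, every item of $R_d$ is allocated under $\chi'$ to an agent in $r_d$, and every item of $S_d$ is allocated under $\chi'$ to an agent in $s_d$.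
   Context: Agents $[n]$, items $[m]$. Each agent $i$ has a set $L_i\subseteq[m]$ of liked items and valuation $v_i(S)=|S\cap L_i|$. An allocation $\chi=(\chi_1,\dots,\chi_n)$ is a tuple of pairwise disjoint subsets of $[m]$; it is clean if $\chi_i\subseteq L_i$ for all $i$, and max-USW if it maximizes $\sum_i v_i(\chi_i)$. Throughout, ''allocation'' means a clean max-USW allocation. Profile: $(h_1,\dots,h_n)$, $h_i=|\chi_i|$. Given $\chi$, form a directed graph on $[n]$ with an arc $(i,i')$, $i\ne i'$, whenever some $o\in\chi_i$ has $o\in L_{i'}$; $\chi$ admits a transfer $u\to v$ if there is a simple directed path from $u$ to $v$ with at least one arc. A transfer $u\to v$ is narrowing if $h_u\ge h_v+2$; $\chi$ is stable if it admits no narrowing transfer. *)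

(* Defs.v *)
From mathcomp Require Import all_boot.
Set Implicit Arguments. Unset Strict Implicit. Unset Printing Implicit Defensive.

Section Fair.
Variables (n m : nat) (L : 'I_n -> {set 'I_m}).

Definition disjoint_alloc (chi : 'I_n -> {set 'I_m}) : Prop :=
  forall i j : 'I_n, i != j -> [disjoint chi i & chi j].

Definition val (i : 'I_n) (S : {set 'I_m}) : nat := #|S :&: L i|.

Definition usw (chi : 'I_n -> {set 'I_m}) : nat := \sum_(i < n) val i (chi i).

Definition clean (chi : 'I_n -> {set 'I_m}) : Prop := forall i, chi i \subset L i.

Definition max_usw (chi : 'I_n -> {set 'I_m}) : Prop :=
  forall chi', disjoint_alloc chi' -> usw chi' <= usw chi.

Definition is_alloc (chi : 'I_n -> {set 'I_m}) : Prop :=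
  [/\ disjoint_alloc chi, clean chi & max_usw chi].

Definition hh (chi : 'I_n -> {set 'I_m}) (i : 'I_n) : nat := #|chi i|.

Definition arc (chi : 'I_n -> {set 'I_m}) : rel 'I_n :=
  fun i i' => (i != i') && [exists o in chi i, o \in L i'].

Definition transfer (chi : 'I_n -> {set 'I_m}) (u v : 'I_n) : Prop :=
  exists p : seq 'I_n,
    [/\ p != [::], uniq (u :: p), path (arc chi) u p & last u p = v].

Definition narrowing (chi : 'I_n -> {set 'I_m}) (u v : 'I_n) : Prop :=
  transfer chi u v /\ hh chi v + 2 <= hh chi u.

Definition stable (chi : 'I_n -> {set 'I_m}) : Prop :=
  is_alloc chi /\ forall u v, ~ narrowing chi u v.

Definition pset (chi : 'I_n -> {set 'I_m}) (d : nat) (i : 'I_n) : Prop :=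
  hh chi i = d /\ exists j, hh chi j + 1 = d /\ transfer chi i j.

Definition qset (chi : 'I_n -> {set 'I_m}) (d : nat) (i : 'I_n) : Prop :=
  hh chi i = d /\ exists k, hh chi k = d + 1 /\ transfer chi k i.

Definition rset (chi : 'I_n -> {set 'I_m}) (d : nat) (i : 'I_n) : Prop :=
  hh chi i = d /\ ~ pset chi d i /\ ~ qset chi d i.

Definition sset (chi : 'I_n -> {set 'I_m}) (d : nat) (i : 'I_n) : Prop :=
  pset chi d i \/ (match d with 0 => False | d'.+1 => qset chi d' i end).

Definition RR (chi : 'I_n -> {set 'I_m}) (d : nat) (o : 'I_m) : Prop :=
  exists i, rset chi d i /\ o \in chi i.

Definition SS (chi : 'I_n -> {set 'I_m}) (d : nat) (o : 'I_m) : Prop :=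
  exists i, sset chi d i /\ o \in chi i.

End Fair.

(* Main.v *)
From Pilot Require Import Defs.
From mathcomp Require Import all_boot zify.
Set Implicit Arguments. Unset Strict Implicit. Unset Printing Implicit Defensive.

Notation darc := Pilot.Defs.arc.
Notation dval := Pilot.Defs.val.

Section S.
Variables (n m : nat) (L : 'I_n -> {set 'I_m}).

Lemma transferP chi u v : transfer L chi u v <-> u != v /\ connect (darc L chi) u v.
Proof.
split.
- case=> p [p0 up pp lp]; split; last by apply/connectP; exists p.
  case: p p0 up pp lp => // a p _ /= /andP[nu _] _ lp.
  apply/eqP => uv; move: nu; rewrite uv -lp.
  by rewrite mem_last.
- case=> nuv /connectP[p pp lp]; subst v.
  move: nuv; case/shortenP: pp => p' pp' up' _ nuv.
  exists p'; split => //.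
  by case: p' pp' up' nuv => //=; rewrite eqxx.
Qed.

Lemma no_narrow chi u v : stable L chi -> connect (darc L chi) u v -> hh chi u <= hh chi v + 1.
Proof.
case=> _ ns c; have [->|nuv] := eqVneq u v; first lia.
rewrite leqNgt; apply/negP => lt; apply: (ns u v); split; first by apply/transferP.
lia.
Qed.

Lemma pq_disj chi d i : stable L chi -> pset L chi d i -> qset L chi d i -> False.
Proof.
move=> st [hi [j [hj /transferP [_ cij]]]] [_ [k [hk /transferP [_ cki]]]].
have := no_narrow st (connect_trans cki cij); lia.
Qed.

Lemma on_seg chi u x v : stable L chi -> connect (darc L chi) u x -> connect (darc L chi) x v ->
  hh chi u = hh chi v + 1 -> sset L chi (hh chi u) x.
Proof.
move=> st cux cxv huv.
have h1 := no_narrow st cux; have h2 := no_narrow st cxv.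
have [e|ne] := eqVneq (hh chi x) (hh chi u).
- left; split => //; exists v; split; first lia.
  apply/transferP; split => //; apply/eqP => xv; subst x; lia.
- right; have -> : hh chi u = (hh chi x).+1 by lia.
  split => //; exists u; split; first lia.
  apply/transferP; split => //; apply/eqP => xv; subst x; lia.
Qed.

Lemma sset_uniq chi d e i : stable L chi -> sset L chi d i -> sset L chi e i -> d = e.
Proof.
move=> st [[hd pd]|qd] [[he pe]|qe].
- lia.
- case: e qe => // e qe; have := qe; case=> he _; subst e d.
  by case: (pq_disj st (conj erefl pd) qe).
- case: d qd => // d qd; have := qd; case=> hd _; subst e d.
  by case: (pq_disj st (conj erefl pe) qd).
- case: d qd => // d [hd _]; case: e qe => // e [he _]; lia.
Qed.

Lemma rs_disj chi d e i : stable L chi -> rset L chi d i -> sset L chi e i -> False.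
Proof.
move=> st [hd [np nq]] [[he pe]|qe].
- by subst; apply: np; split.
- case: e qe => // e qe; have := qe; case=> he _; subst; exact: nq.
Qed.

Lemma scc_s chi d i j : stable L chi -> connect (darc L chi) i j -> connect (darc L chi) j i ->
  sset L chi d i -> sset L chi d j.
Proof.
move=> st cij cji.
have h1 := no_narrow st cij; have h2 := no_narrow st cji.
case=> [[hi [l [hl /transferP [_ cil]]]] | qd].
- have [e|ne] := eqVneq (hh chi j) d.
  + left; split => //; exists l; split => //; apply/transferP; split.
      by apply/eqP => jl; subst; lia.
    exact: connect_trans cji cil.
  + have [e2|ne2] := eqVneq (hh chi j) d.+1.
    * have := no_narrow st (connect_trans cji cil); lia.
    * right; have -> : d = (hh chi j).+1 by lia.
      split => //; exists i; split; first lia.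
      apply/transferP; split => //; apply/eqP => ij; subst; lia.
- case: d qd => // d [hi [k [hk /transferP [_ cki]]]].
  have [e|ne] := eqVneq (hh chi j) d.
  + right; split => //; exists k; split => //; apply/transferP; split.
      by apply/eqP => jl; subst; lia.
    exact: connect_trans cki cij.
  + have [e2|ne2] := eqVneq (hh chi j) d.+1.
    * left; split => //; exists i; split; first lia.
      apply/transferP; split => //; apply/eqP => ij; subst; lia.
    * have := no_narrow st (connect_trans cki cij); lia.
Qed.

Lemma scc_r chi d i j : stable L chi -> connect (darc L chi) i j -> connect (darc L chi) j i ->
  rset L chi d i -> rset L chi d j.
Proof.
move=> st cij cji [hi [np nq]].
have h1 := no_narrow st cij; have h2 := no_narrow st cji.
have [e|ne] := eqVneq (hh chi j) d.
- split => //; split.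
  + case=> _ [l [hl /transferP [_ cjl]]]; apply: np; split => //; exists l; split => //.
    apply/transferP; split; last exact: connect_trans cij cjl.
    by apply/eqP => il; subst; lia.
  + case=> _ [k [hk /transferP [_ ckj]]]; apply: nq; split => //; exists k; split => //.
    apply/transferP; split; last exact: connect_trans ckj cji.
    by apply/eqP => il; subst; lia.
- have [e2|ne2] := eqVneq (hh chi j) d.+1.
  + exfalso; apply: nq; split => //; exists j; split; first lia.
    apply/transferP; split => //; apply/eqP => ij; subst; lia.
  + exfalso; apply: np; split => //; exists j; split; first lia.
    apply/transferP; split => //; apply/eqP => ij; subst; lia.
Qed.


Lemma disjN (A B : {set 'I_m}) w : [disjoint A & B] -> w \in A -> w \in B -> False.
Proof.
move=> /disjoint_setI0 e wA wB; have : w \in A :&: B by rewrite inE wA wB.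
by rewrite e inE.
Qed.

Lemma card_bigcupX (A : 'I_n -> {set 'I_m}) (X : {set 'I_n}) :
  disjoint_alloc A -> #|\bigcup_(x in X) A x| = \sum_(x in X) #|A x|.
Proof.
move=> dA.
pose F x := if x \in X then A x else set0.
have -> : \bigcup_(x in X) A x = \bigcup_x F x by rewrite big_mkcond.
rewrite -sum1_card (partition_disjoint_bigcup addn) /=; last first.
  move=> i j nij; rewrite /F; case: (i \in X); case: (j \in X);
    rewrite ?dA // -setI_eq0 ?setI0 ?set0I //.
symmetry; rewrite big_mkcond /=; apply: eq_bigr => x _; rewrite sum1_card /F.
by case: (x \in X); rewrite ?cards0.
Qed.

Lemma count_lem (A B : 'I_n -> {set 'I_m}) (X : {set 'I_n}) j o :
 disjoint_alloc A -> disjoint_alloc B ->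
 (forall x o', x \in X -> o' \in A x -> exists2 y, y \in X & o' \in B y) ->
 j \in X -> o \in B j -> (forall x, x \in X -> o \notin A x) ->
 exists2 v, v \in X & #|A v| < #|B v|.
Proof.
move=> dA dB cl jX oB oA.
have lt : #|\bigcup_(x in X) A x| < #|\bigcup_(x in X) B x|.
  apply: proper_card; apply/properP; split.
    apply/subsetP => z /bigcupP [x xX zA]; have [y yX zB] := cl x z xX zA.
    by apply/bigcupP; exists y.
  exists o; first by apply/bigcupP; exists j.
  by apply/bigcupP => [[x xX oAx]]; move: (oA x xX); rewrite oAx.
rewrite !card_bigcupX // in lt.
have [/existsP [v /andP [vX ltv]] | ne] := boolP [exists v, (v \in X) && (#|A v| < #|B v|)].
  by exists v.
exfalso; move: lt; rewrite ltnNge => /negP; apply; apply: leq_sum => v vX.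
rewrite leqNgt; apply/negP => ltv; move/negP: ne; apply; apply/existsP; exists v.
by rewrite vX ltv.
Qed.

Lemma alloc_ex chi' o x : disjoint_alloc chi' -> max_usw L chi' -> o \in L x ->
  exists y, o \in chi' y.
Proof.
move=> dc mx oL.
have [/existsP [y oy] | ne] := boolP [exists y, o \in chi' y]; first by exists y.
exfalso.
have no : forall y, o \notin chi' y by move=> y; apply/negP => oy; move/negP: ne; apply; apply/existsP; exists y.
pose c2 y := if y == x then o |: chi' x else chi' y.
have d2 : disjoint_alloc c2.
  move=> y z nyz; rewrite /c2.
  have [eyx|nyx] := eqVneq y x; have [ezx|nzx] := eqVneq z x.
  - by subst; rewrite eqxx in nyz.
  - subst y; rewrite -setI_eq0; apply/eqP/setP => w; rewrite !inE.
    case: (eqVneq w o) => [->|_] /=; first by rewrite (negbTE (no z)) ?andbF.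
    apply/negbTE; apply/negP => /andP [w1 w2].
    exact: (disjN (dc x z nyz) w1 w2).
  - subst z; rewrite -setI_eq0; apply/eqP/setP => w; rewrite !inE.
    case: (eqVneq w o) => [->|_] /=; first by rewrite (negbTE (no y)).
    apply/negbTE; apply/negP => /andP [w1 w2].
    exact: (disjN (dc y x nyx) w1 w2).
  - exact: dc.
have := mx c2 d2.
rewrite /usw (bigD1 x) //= [X in _ <= X](bigD1 x) //=.
have -> : \sum_(i < n | i != x) dval L i (c2 i) = \sum_(i < n | i != x) dval L i (chi' i).
  by apply: eq_bigr => i /negbTE nix; rewrite /c2 nix.
have -> : dval L x (c2 x) = (dval L x (chi' x)).+1.
  rewrite /dval /c2 eqxx.
  have -> : (o |: chi' x) :&: L x = o |: (chi' x :&: L x).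
    by apply/setP => w; rewrite !inE; case: (eqVneq w o) => [->|] //=; rewrite oL.
  by rewrite cardsU1 inE (negbTE (no x)).
by rewrite addSn ltnn.
Qed.

Lemma key chi chi' i j o : stable L chi -> stable L chi' -> o \in chi i -> o \in chi' j -> i != j ->
  connect (darc L chi) j i \/
  exists u v, [/\ connect (darc L chi) u i, connect (darc L chi) j v & hh chi u = hh chi v + 1].
Proof.
move=> st st' oi oj nij.
have st0 := st; have st0' := st'.
case: st => [[dA cA mA] _]; case: st' => [[dB cB mB] _].
pose D := [rel x y : 'I_n | (x != y) && [exists o, (o \in chi x) && (o \in chi' y)]].
have sub1 : forall x y, connect D x y -> connect (darc L chi) x y.
  apply: connect_sub => x y /andP [nxy /existsP [o' /andP [o1 o2]]].
  apply: connect1; rewrite /darc nxy /=; apply/existsP; exists o'.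
  by rewrite o1 (subsetP (cB y)).
have sub2 : forall x y, connect D x y -> connect (darc L chi') y x.
  move=> x y cxy; have e := connect_rev (darc L chi') x y; rewrite /= in e; rewrite -e {e}.
  move: x y cxy; apply: connect_sub => x y /andP [nxy /existsP [o' /andP [o1 o2]]].
  apply: connect1; rewrite /= /darc eq_sym nxy /=; apply/existsP; exists o'.
  by rewrite o2 (subsetP (cA x)).
have [cji|ncji] := boolP (connect D j i); first by left; apply: sub1.
right.
have Dij : D i j by rewrite /= nij; apply/existsP; exists o; rewrite oi oj.
have [v vX ltv] : exists2 v, v \in [set v | connect D j v] & #|chi v| < #|chi' v|.
  apply: (@count_lem chi chi' _ j o) => //.
  - move=> x o' xX o'x; have [y o'y] := alloc_ex dB mB (subsetP (cA x) _ o'x).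
    exists y => //; have [->|nxy] := eqVneq y x; first by [].
    rewrite inE in xX; rewrite inE; apply: (connect_trans xX); apply: connect1.
    by rewrite /= eq_sym nxy /=; apply/existsP; exists o'; rewrite o'x o'y.
  - by rewrite inE connect0.
  - move=> x; rewrite inE => cjx; apply/negP => ox.
    have [exi|nxi] := eqVneq x i; first by subst; rewrite cjx in ncji.
    exact: (disjN (dA x i nxi) ox oi).
have [u uY ltu] : exists2 u, u \in [set u | connect D u i] & #|chi' u| < #|chi u|.
  apply: (@count_lem chi' chi _ i o) => //.
  - move=> x o' xX o'x; have [y o'y] := alloc_ex dA mA (subsetP (cB x) _ o'x).
    exists y => //; have [->|nxy] := eqVneq y x; first by [].
    rewrite inE in xX; rewrite inE; apply: connect_trans xX; apply: connect1.
    by rewrite /= nxy /=; apply/existsP; exists o'; rewrite o'x o'y.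
  - by rewrite inE connect0.
  - move=> x; rewrite inE => cxi; apply/negP => ox.
    have [exj|nxj] := eqVneq x j; first by subst; rewrite cxi in ncji.
    exact: (disjN (dB x j nxj) ox oj).
rewrite inE in vX; rewrite inE in uY.
have cij : connect D i j by apply: connect1.
exists u, v; split; [exact: (sub1 _ _ uY) | exact: (sub1 _ _ vX) |].
have h1 := no_narrow st0 (sub1 _ _ (connect_trans uY (connect_trans cij vX))).
have h2 := no_narrow st0' (sub2 _ _ (connect_trans uY (connect_trans cij vX))).
rewrite /hh in h1 h2 *; lia.
Qed.

End S.

Theorem lemma2 (n m : nat) (L : 'I_n -> {set 'I_m})
    (chi chi' : 'I_n -> {set 'I_m}) :
  stable L chi -> stable L chi' ->
  forall d : nat,
    (forall o : 'I_m, RR L chi d o -> exists i, rset L chi d i /\ o \in chi' i) /\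
    (forall o : 'I_m, SS L chi d o -> exists i, sset L chi d i /\ o \in chi' i).
Proof.
move=> st st' d.
have st0 := st; have st0' := st'.
case: st => [[dA cA mA] _]; case: st' => [[dB cB mB] _].
have common : forall o i, o \in chi i -> exists j, o \in chi' j /\ (j = i \/ (i != j /\ connect (darc L chi) i j)).
  move=> o i oi; have [j oj] := alloc_ex dB mB (subsetP (cA i) _ oi).
  exists j; split => //; have [->|nij] := eqVneq j i; first by left.
  right; split => //; apply: connect1.
  by rewrite /darc eq_sym nij /=; apply/existsP; exists o; rewrite oi (subsetP (cB j)).
split.
- move=> o [i [ri oi]]; have [j [oj [eji|[nij cij]]]] := common o i oi; first by subst j; exists i.
  exists j; split => //.
  case: (key st0 st0' oi oj nij) => [cji | [u [v [cui cjv huv]]]].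
    exact: scc_r st0 cij cji ri.
  exfalso; apply: (rs_disj st0 ri (on_seg st0 cui (connect_trans cij cjv) huv)).
- move=> o [i [si oi]]; have [j [oj [eji|[nij cij]]]] := common o i oi; first by subst j; exists i.
  exists j; split => //.
  case: (key st0 st0' oi oj nij) => [cji | [u [v [cui cjv huv]]]].
    exact: scc_s st0 cij cji si.
  have := sset_uniq st0 si (on_seg st0 cui (connect_trans cij cjv) huv) => ->.
  exact: (on_seg st0 (connect_trans cui cij) cjv huv).
Qed.
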